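(* Let $\mathcal G$ be a finite (not necessarily connected) groupoid and $\alpha=(S_g,\alpha_g)_{g\in\mathcal G}$ a unital global action of $\mathcal G$ on a commutative ring $S=\bigoplus_{y\in\mathcal G_0}S_y$, with $S_g=S1_g$ and $1_g\ne0$ for all $g$, such that $S$ is an $\alpha$-partial Galois extension of $R=S^{\alpha_{\mathcal G}}$. Let $\mathcal G_1,\dots,\mathcal G_r$ be the connected components of $\mathcal G$. Let $\mathcal H$ be a wide subgroupoid of $\mathcal G$, put $\mathcal H_j=\mathcal H\cap\mathcal G_j$, let $\mathcal H_{j,1},\dots,\mathcal H_{j,n_j}$ be the connected components of $\mathcal H_j$ with object sets $Y_{j,1},\dots,Y_{j,n_j}$, and choose $y_{j,i}\in Y_{j,i}$. Then $$S^{\alpha_{\mathcal H}}\simeq\bigoplus_{j=1}^r\bigoplus_{i=1}^{n_j}S_{y_{j,i}}^{\alpha_{\mathcal H_{j,i}(y_{j,i})}}.$$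
   Context: A groupoid is a small category with all morphisms invertible; $\mathcal G_0$ is its object set (identified with identity morphisms), $s(g),t(g)$ source and target, $\mathcal G(x,y)=\{g:s(g)=x,t(g)=y\}$, $\mathcal G(x)=\mathcal G(x,x)$; $gh$ defined iff $s(g)=t(h)$; connected components are full subgroupoids on classes of $x\sim y\iff\mathcal G(x,y)\ne\emptyset$; a subgroupoid is wide if it contains all objects. A partial action $\alpha=(S_g,\alpha_g)_{g\in\mathcal G}$ on a ring $S$: for each $g$, $S_{t(g)}$ is an ideal of $S$, $S_g$ an ideal of $S_{t(g)}$, $\alpha_g:S_{g^{-1}}\to S_g$ a ring isomorphism; $\alpha_x=\mathrm{id}_{S_x}$; for composable $(g,h)$, $\alpha_h^{-1}(S_{g^{-1}}\cap S_h)\subseteq S_{(gh)^{-1}}$ and $\alpha_g\alpha_h(a)=\alpha_{gh}(a)$ there. It is global if $\alpha_g\alpha_h=\alpha_{gh}$ for all composable pairs; unital if $S_g=S1_g$ with $1_g$ a central idempotent. For a subgroupoid $\mathcal K$ and subring $A\subseteq S$, $A^{\alpha_{\mathcal K}}=\{a\in A:\alpha_k(a1_{k^{-1}})=a1_k\ \forall k\in\mathcal K\}$; in particular $S_{y}^{\alpha_{\mathcal H_{j,i}(y)}}$ is the subring of $S_y$ fixed by the isotropy group $\mathcal H_{j,i}(y)$. $S$ is an $\alpha$-partial Galois extension of $R=S^{\alpha_{\mathcal G}}$ if there exist $m\ge1$, $a_i,b_i\in S$ with $\sum_{i=1}^m a_i\alpha_g(b_i1_{g^{-1}})=\delta_{z,g}1_z$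 for all $z\in\mathcal G_0$, $g\in\mathcal G$ (i.e. $1_g$ if $g\in\mathcal G_0$, $0$ otherwise). *)

(* Defs.v *)
From HB Require Import structures.
From mathcomp Require Import all_boot all_order all_algebra.
Set Implicit Arguments. Unset Strict Implicit. Unset Printing Implicit Defensive.
Import GRing.Theory.
Local Open Scope ring_scope.

(* Finite groupoids.  Morphisms form a finType T; objects are the     *)
(* identity morphisms (predicate gobj).  gmul g h is g h (g after h), *)
(* meaningful only when src g = tgt h.                                *)
Record groupoid (T : finType) := Groupoid {
  gobj : pred T;
  src : T -> T;
  tgt : T -> T;
  gmul : T -> T -> T;
  ginv : T -> T;
  gobj_src : forall g, gobj (src g);
  gobj_tgt : forall g, gobj (tgt g);
  src_obj : forall x, gobj x -> src x = x;
  tgt_obj : forall x, gobj x -> tgt x = x;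
  src_mul : forall g h, src g = tgt h -> src (gmul g h) = src h;
  tgt_mul : forall g h, src g = tgt h -> tgt (gmul g h) = tgt g;
  gmulA : forall g h k, src g = tgt h -> src h = tgt k ->
            gmul g (gmul h k) = gmul (gmul g h) k;
  gmul1l : forall g, gmul (tgt g) g = g;
  gmul1r : forall g, gmul g (src g) = g;
  src_inv : forall g, src (ginv g) = tgt g;
  tgt_inv : forall g, tgt (ginv g) = src g;
  gmulVg : forall g, gmul (ginv g) g = src g;
  gmulgV : forall g, gmul g (ginv g) = tgt g
}.

Section GroupoidDefs.
Variables (T : finType) (G : groupoid T).

Definition gconnected (x y : T) : Prop :=
  exists g, src G g = x /\ tgt G g = y.

Definition subgroupoid (H : pred T) : Prop :=
  [/\ forall h, H h -> H (src G h) /\ H (tgt G h),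
      forall g h, H g -> H h -> src G g = tgt G h -> H (gmul G g h)
    & forall h, H h -> H (ginv G h)].

Definition wide_subgroupoid (H : pred T) : Prop :=
  subgroupoid H /\ forall x, gobj G x -> H x.

Definition sub_connected (H : pred T) (x y : T) : Prop :=
  exists h, H h /\ src G h = x /\ tgt G h = y.

Definition isotropy (H : pred T) (y : T) : pred T :=
  fun h => H h && (src G h == y) && (tgt G h == y).

Variables (S : comPzRingType) (e : T -> S) (alpha : T -> S -> S).
(* e g = 1_g, S_g = S 1_g ;  alpha g : S_{g^-1} -> S_g *)

Definition inS (g : T) (a : S) : Prop := a * e g = a.

Definition unital_global_action : Prop :=
  (forall g, e g * e g = e g) /\
  (* S_g is an ideal of S_{t(g)} *)
  (forall g, e g * e (tgt G g) = e g) /\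
  (* alpha_g : S_{g^-1} -> S_g is a ring isomorphism *)
  (forall g a, inS (ginv G g) a -> inS g (alpha g a)) /\
  (forall g a b, inS (ginv G g) a -> inS (ginv G g) b ->
     alpha g a = alpha g b -> a = b) /\
  (forall g b, inS g b -> exists2 a, inS (ginv G g) a & alpha g a = b) /\
  (forall g a b, inS (ginv G g) a -> inS (ginv G g) b ->
     alpha g (a + b) = alpha g a + alpha g b
     /\ alpha g (a * b) = alpha g a * alpha g b) /\
  (forall g, alpha g (e (ginv G g)) = e g) /\
  (forall x a, gobj G x -> inS x a -> alpha x a = a) /\
  (* partial-action composition axiom together with globality:
     alpha_g alpha_h = alpha_{gh} as partial maps, i.e. the domain
     alpha_h^{-1}(S_{g^-1} cap S_h) equals S_{(gh)^-1} and the values agree *)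
  (forall g h, src G g = tgt G h ->
     forall a,
       ((inS (ginv G h) a /\ inS (ginv G g) (alpha h a))
          <-> inS (ginv G (gmul G g h)) a)
       /\ (inS (ginv G h) a -> inS (ginv G g) (alpha h a) ->
           alpha g (alpha h a) = alpha (gmul G g h) a)).

(* S = (+)_{y in G_0} S_y  (internal direct sum of the ideals S 1_y) *)
Definition obj_decomposition : Prop :=
  (forall x y, gobj G x -> gobj G y -> x != y -> e x * e y = 0)
  /\ \sum_(x | gobj G x) e x = 1.

Definition fixed (K : pred T) (A : S -> Prop) (a : S) : Prop :=
  A a /\ forall k, K k -> alpha k (a * e (ginv G k)) = a * e k.

Definition partial_galois : Prop :=
  exists m : nat, (0 < m)%N /\
  exists (a b : 'I_m -> S),
    forall g, \sum_(i < m) a i * alpha g (b i * e (ginv G g))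
              = if gobj G g then e g else 0.

End GroupoidDefs.

(* Main.v *)
Require Import Defs.
From HB Require Import structures.
From mathcomp Require Import all_boot all_order all_algebra.
Import GRing.Theory.
Local Open Scope ring_scope.

Theorem proposition5p14
  (T : finType) (G : groupoid T) (S : comPzRingType)
  (e : T -> S) (alpha : T -> S -> S)
  (Hact : unital_global_action G e alpha)
  (Hne0 : forall g, e g != 0)
  (Hdec : obj_decomposition G e)
  (Hgal : partial_galois G e alpha)
  (* connected components G_1, ..., G_r of G, given by their object sets *)
  (r : nat) (Gc : 'I_r -> pred T)
  (HGc_obj : forall j x, Gc j x -> gobj G x)
  (HGc_ne : forall j, exists x, Gc j x)
  (HGc_cov : forall x, gobj G x -> exists j, Gc j x)
  (HGc_comp : forall j x y, Gc j x -> gobj G y -> (Gc j y <-> gconnected G x y))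
  (HGc_inj : forall j j' x, Gc j x -> Gc j' x -> j = j')
  (* wide subgroupoid H *)
  (H : pred T) (HH : wide_subgroupoid G H)
  (* chosen objects y_{j,i}, one in each connected component H_{j,i}
     of H_j = H cap G_j *)
  (n : 'I_r -> nat) (y : forall j : 'I_r, 'I_(n j) -> T)
  (Hy_in : forall j i, Gc j (y j i))
  (Hy_dist : forall j i i', sub_connected G H (y j i) (y j i') -> i = i')
  (Hy_cov : forall j x, Gc j x -> exists i, sub_connected G H (y j i) x) :
  exists phi : S -> forall j : 'I_r, 'I_(n j) -> S,
    [/\ (forall a, fixed G e alpha H (fun _ => True) a ->
           forall j i, fixed G e alpha (isotropy G H (y j i))
                         (inS e (y j i)) (phi a j i)),
        (forall a b, fixed G e alpha H (fun _ => True) a ->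
           fixed G e alpha H (fun _ => True) b ->
           (forall j i, phi a j i = phi b j i) -> a = b),
        (forall f : forall j : 'I_r, 'I_(n j) -> S,
           (forall j i, fixed G e alpha (isotropy G H (y j i))
                          (inS e (y j i)) (f j i)) ->
           exists2 a, fixed G e alpha H (fun _ => True) a &
                      forall j i, phi a j i = f j i),
        (forall a b, fixed G e alpha H (fun _ => True) a ->
           fixed G e alpha H (fun _ => True) b ->
           forall j i, phi (a + b) j i = phi a j i + phi b j i
                       /\ phi (a * b) j i = phi a j i * phi b j i)
      & (forall j i, phi 1 j i = e (y j i))].
Proof.
case: Hact => eI [eT [amap [_ [_ [_ [_ [_ acomp]]]]]]].
case: Hdec => eorth esum.
case: HH => [[Hst Hmul Hinv] Hobj].
have ginvK : forall g, ginv G (ginv G g) = g.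
  move=> g; rewrite -[LHS](gmul1r G) src_inv tgt_inv -(gmulVg G g).
  rewrite gmulA ?src_inv ?tgt_inv // gmulVg src_inv gmul1l //.
have ginv_obj : forall x, gobj G x -> ginv G x = x.
  move=> x Hx; rewrite -[LHS](gmul1r G) src_inv tgt_obj // gmulVg src_obj //.
have eV : forall g, e (ginv G g) = e (src G g).
  move=> g; have [H1 _] := acomp (ginv G g) g (src_inv G g) (e (src G g)).
  rewrite gmulVg (ginv_obj (src G g) (gobj_src G g)) in H1.
  have [H2 _] := proj2 H1 (eI _).
  have H3 := eT (ginv G g); rewrite tgt_inv in H3.
  by rewrite -H3 mulrC H2.
have eTg : forall g, e g = e (tgt G g).
  by move=> g; rewrite -{1}(ginvK g) eV src_inv.
have acomp' : forall g h a, src G g = tgt G h -> a * e (src G h) = a ->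
    alpha g (alpha h a) = alpha (gmul G g h) a.
  move=> g h a Hgh Ha; apply: (proj2 (acomp g h Hgh a)); rewrite /inS ?eV //.
  rewrite Hgh -eTg; apply: amap; by rewrite /inS eV.
have fix_iso : forall k f yy, src G k = yy -> tgt G k = yy ->
    alpha k (f * e (ginv G k)) = f * e k -> f * e yy = f -> alpha k f = f.
  by move=> k f yy ks kt; rewrite eV [e k]eTg ks kt => + Hf; rewrite Hf.
have fixH : forall a h, fixed G e alpha H (fun _ => True) a -> H h ->
    a * e (tgt G h) = alpha h (a * e (src G h)).
  by move=> a h [_ Ha] Hh; rewrite -eV -eTg Ha.
exists (fun a j i => a * e (y j i)); split.
- move=> a [_ Ha] j i; split; first by rewrite /inS -mulrA eI.
  move=> k /andP[/andP[Hk /eqP ks] /eqP kt].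
  rewrite eV [e k]eTg ks kt -mulrA eI.
  by have := Ha k Hk; rewrite eV [e k]eTg ks kt.
- move=> a b Ha Hb Hab.
  rewrite -(mulr1 a) -(mulr1 b) -esum !mulr_sumr; apply: eq_bigr => x Hx.
  have [j Hj] := HGc_cov x Hx. have [i [h [Hh [hs ht]]]] := Hy_cov j x Hj.
  by rewrite -ht (fixH a) // (fixH b) // hs Hab.
- move=> f Hf.
  have fE : forall j i h, src G h = y j i -> f j i * e (ginv G h) = f j i.
    by move=> j i h hs; rewrite eV hs; case: (Hf j i).
  pose F j i x := if [pick h | H h && (src G h == y j i) && (tgt G h == x)]
                  is Some h then alpha h (f j i) else 0.
  have Fe0 : forall j i x x0, gobj G x0 -> x != x0 -> F j i x * e x0 = 0.
    move=> j i x x0 Hx0 Hne; rewrite /F; case: pickP => [h /andP[/andP[_ /eqP hs] /eqP ht]|_]; last by rewrite mul0r.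
    have Hm := amap h (f j i) (fE j i h hs).
    rewrite -Hm [e h]eTg ht -mulrA eorth ?mulr0 //; rewrite -ht; exact: gobj_tgt.
  have Fz : forall j i x0, gobj G x0 -> ~ sub_connected G H (y j i) x0 ->
      (\sum_(x : T) F j i x) * e x0 = 0.
    move=> j i x0 Hx0 Hnc; rewrite mulr_suml; apply: big1 => x _.
    have [->|Hne] := eqVneq x x0; last exact: Fe0.
    rewrite /F; case: pickP => [h /andP[/andP[Hh /eqP hs] /eqP ht]|_]; last by rewrite mul0r.
    by exfalso; apply: Hnc; exists h.
  pose a := \sum_(j < r) \sum_(i < n j) \sum_(x : T) F j i x.
  have key : forall j0 i0 x0 h0, H h0 -> src G h0 = y j0 i0 -> tgt G h0 = x0 ->
      exists h1, [/\ H h1, src G h1 = y j0 i0, tgt G h1 = x0 &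
                     a * e x0 = alpha h1 (f j0 i0)].
    move=> j0 i0 x0 h0 Hh0 h0s h0t.
    have Hx0 : gobj G x0 by rewrite -h0t; exact: gobj_tgt.
    have Gj0 : Gc j0 x0.
      by apply/(HGc_comp j0 (y j0 i0) x0 (Hy_in j0 i0) Hx0); exists h0.
    rewrite /a mulr_suml (bigD1 j0) //= [X in _ + X]big1 ?addr0; last first.
      move=> j Hj; rewrite mulr_suml big1 // => i _; apply: (Fz) => // -[h [Hh [hs ht]]].
      have Gj : Gc j x0.
        by apply/(HGc_comp j (y j i) x0 (Hy_in j i) Hx0); exists h.
      by move/eqP: Hj; apply; apply: HGc_inj Gj Gj0.
    rewrite mulr_suml (bigD1 i0) //= [X in _ + X]big1 ?addr0; last first.
      move=> i Hi; apply: (Fz) => // -[h [Hh [hs ht]]].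
      move/eqP: Hi; apply; apply: Hy_dist.
      exists (gmul G (ginv G h0) h); split.
        by apply: (Hmul) => //; [exact: (Hinv) | rewrite src_inv h0t ht].
      rewrite src_mul ?tgt_mul ?tgt_inv ?src_inv ?h0t ?ht //.
    rewrite mulr_suml (bigD1 x0) //= [X in _ + X]big1 ?addr0; last first.
      by move=> x Hx; apply: Fe0.
    rewrite /F; case: pickP => [h /andP[/andP[Hh /eqP hs] /eqP ht]|none]; last first.
      by move: (none h0); rewrite Hh0 h0s h0t !eqxx.
    exists h; split => //.
    have Hm := amap h (f j0 i0) (fE j0 i0 h hs).
    by rewrite -{2}Hm [e h]eTg ht.
  exists a.
    split => // k Hk.
    rewrite eV [e k]eTg.
    have Hxo := gobj_src G k.
    have [j Hj] := HGc_cov _ Hxo.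
    have [i [h0 [Hh0 [h0s h0t]]]] := Hy_cov j _ Hj.
    have [h1 [Hh1 h1s h1t ->]] := key j i (src G k) h0 Hh0 h0s h0t.
    have Hkh1 : src G k = tgt G h1 by [].
    have [h2 [Hh2 h2s h2t ->]] := key j i (tgt G k) (gmul G k h1)
       (Hmul _ _ Hk Hh1 Hkh1) (etrans (src_mul Hkh1) h1s) (tgt_mul Hkh1).
    rewrite acomp' //; last by rewrite -eV fE.
    pose g := gmul G (ginv G h2) (gmul G k h1).
    have Hg1 : src G (ginv G h2) = tgt G (gmul G k h1) by rewrite src_inv h2t tgt_mul.
    have gs : src G g = y j i by rewrite src_mul // src_mul.
    have gt : tgt G g = y j i by rewrite tgt_mul // tgt_inv.
    have Hg : alpha g (f j i) = f j i.
      apply: (fix_iso g (f j i) (y j i)) => //; last by case: (Hf j i).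
      case: (Hf j i) => _; apply; rewrite /isotropy gs gt !eqxx !andbT.
      by apply: (Hmul) => //; [exact: (Hinv) | exact: (Hmul)].
    rewrite -{2}Hg acomp'; last by rewrite gs; case: (Hf j i).
      rewrite /g gmulA ?gmulgV; last by [].
        by rewrite h2t -(tgt_mul Hkh1) gmul1l.
      by rewrite tgt_inv.
    by rewrite gt h2s.
  move=> j i.
  have Hyo := HGc_obj _ _ (Hy_in j i).
  have [h1 [Hh1 h1s h1t ->]] := key j i (y j i) (y j i) (Hobj _ Hyo) (src_obj Hyo) (tgt_obj Hyo).
  apply: (fix_iso h1 (f j i) (y j i)) => //; last by case: (Hf j i).
  case: (Hf j i) => _; apply; by rewrite /isotropy Hh1 h1s h1t !eqxx.
- move=> a b _ _ j i; split; first by rewrite mulrDl.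
  by rewrite mulrACA eI.
- by move=> j i; rewrite mul1r.
Qed.
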